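(* Let $U\subseteq S$ be measurable, $\gamma\in(0,1)$, $r(s,a,s')=\mathbf 1_{\{s\in U\}}$, and $\pi$ a stationary policy. Let $I\subseteq S$ be a measurable set that is absorbing under $\pi$, and assume $\Pr_\pi(\tau_U<\infty\mid S_0=s)=1$ for all $s\in I\setminus U$. Then for all $s\in I\setminus U$, $$\mathbb{E}_\pi[V^\pi(S_1)\mid S_0=s]-V^\pi(s)>0.$$
   Context: $(S,\mathit{Act},P,\mu)$ is an MDP with state/action spaces finite/countable or Borel subsets of Euclidean space. A stationary policy $\pi$ is a stochastic kernel on $\mathit{Act}$ given $S$; $\Pr_\pi(\cdot\mid S_0=s)$, $\mathbb{E}_\pi[\cdot\mid S_0=s]$ refer to the process with $S_0=s$, $A_t\sim\pi(\cdot\mid S_t)$, $S_{t+1}\sim P(\cdot\mid S_t,A_t)$. Value function: $V^\pi(s)=\mathbb{E}_\pi[\sum_{t\ge0}\gamma^t r(S_t,A_t,S_{t+1})\mid S_0=s]$. A measurable set $X$ is absorbing under $\pi$ if $\Pr_\pi(S_1\in X\mid S_0=s)=1$ for all $s\in X$. $\tau_U:=\inf\{t\ge0:S_t\in U\}$, $\inf\emptyset=\infty$. *)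

(* Defs.v *)
From HB Require Import structures.
From mathcomp Require Import all_boot all_order all_algebra.
From mathcomp Require Import all_classical all_reals all_analysis.
Set Implicit Arguments. Unset Strict Implicit. Unset Printing Implicit Defensive.
Import Order.TTheory GRing.Theory Num.Theory.
Local Open Scope classical_set_scope.
Local Open Scope ring_scope.

(* The law of the
   process started at S_0 = s is determined by its finite-dimensional
   distributions; we express every quantity of the paper through them
   (one-step operator = conditional expectation given S_0 = s). *)
Section MDP.
Context (R : realType) (dS dA : measure_display)
  (S : measurableType dS) (A : measurableType dA).
Variables (P : R.-pker (S * A)%type ~> S) (pi : R.-pker S ~> A).
Local Open Scope ereal_scope.

(* E_pi[ f(S_1) | S_0 = s ] *)
Definition exp_next (f : S -> \bar R) (s : S) : \bar R :=
  \int[pi s]_a \int[P (s, a)]_s' f s'.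

(* E_pi[ f(S_n) | S_0 = s ] (Markov property: n-fold iterate). *)
Fixpoint exp_at (n : nat) (f : S -> \bar R) : S -> \bar R :=
  match n with
  | O => f
  | n'.+1 => exp_next (exp_at n' f)
  end.

Definition exp_reward (r : S -> A -> S -> R) (s : S) : \bar R :=
  \int[pi s]_a \int[P (s, a)]_s' (r s a s')%:E.

Definition value (gamma : R) (r : S -> A -> S -> R) (s : S) : \bar R :=
  \sum_(0 <= t <oo) ((gamma ^+ t)%:E * exp_at t (exp_reward r) s).

Definition absorbing (X : set S) : Prop :=
  forall s, X s -> exp_next (fun y => (\1_X y)%:E) s = 1.

(* Pr_pi(S_0 \notin U, ..., S_n \notin U | S_0 = s) *)
Fixpoint avoid_prob (U : set S) (n : nat) : S -> \bar R :=
  match n with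
  | O => fun s => (\1_(~` U) s)%:E
  | n'.+1 => fun s => (\1_(~` U) s)%:E * exp_next (avoid_prob U n') s
  end.

(* Pr_pi(tau_U <= n | S_0 = s) *)
Definition hit_by (U : set S) (n : nat) (s : S) : \bar R :=
  1 - avoid_prob U n s.

(* Pr_pi(tau_U < oo | S_0 = s) = sup_n Pr_pi(tau_U <= n | S_0 = s)
   (continuity from below of the path measure). *)
Definition hit_prob (U : set S) (s : S) : \bar R :=
  ereal_sup (range (fun n => hit_by U n s)).

End MDP.

(* Main.v *)
Require Import Defs.
From HB Require Import structures.
From mathcomp Require Import all_boot all_order all_algebra.
From mathcomp Require Import all_classical all_reals all_analysis.
From mathcomp Require Import measurable_realfun.
Import Order.TTheory GRing.Theory Num.Theory.
Local Open Scope classical_set_scope.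
Local Open Scope ring_scope.

Section Helpers.
Context (R : realType) (dS dA : measure_display)
  (S : measurableType dS) (A : measurableType dA)
  (P : R.-pker (S * A)%type ~> S) (pi : R.-pker S ~> A).
Local Open Scope ereal_scope.

Definition nnm (f : S -> \bar R) := (forall x, 0 <= f x) /\ measurable_fun setT f.

Lemma inner_meas f : nnm f ->
  measurable_fun [set: S * A] (fun sa => \int[P sa]_y f y).
Proof.
move=> [f0 mf]; apply: measurable_fun_integral_kernel => //.
exact: measurable_kernel.
Qed.

Lemma inner_ge0 f : nnm f -> forall sa, 0 <= \int[P sa]_y f y.
Proof. by move=> [f0 mf] sa; apply: integral_ge0 => y _. Qed.

Lemma exp_next_meas f : nnm f -> measurable_fun [set: S] (exp_next P pi f).
Proof.
move=> hf; rewrite /exp_next.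
apply: (measurable_fun_integral_finite_kernel (fun sa => \int[P sa]_y f y) pi).
- exact: inner_ge0.
- exact: inner_meas.
Qed.

Lemma exp_next_ge0 f : nnm f -> forall s, 0 <= exp_next P pi f s.
Proof. by move=> hf s; apply: integral_ge0 => a _; exact: inner_ge0. Qed.

Lemma exp_next_nnm f : nnm f -> nnm (exp_next P pi f).
Proof. by move=> hf; split; [exact: exp_next_ge0|exact: exp_next_meas]. Qed.

Lemma sec_meas f s : nnm f -> measurable_fun [set: A] (fun a => \int[P (s, a)]_y f y).
Proof. by move=> hf; apply: (measurable_fun_pair2 (f:=fun sa => \int[P sa]_y f y)); exact: inner_meas. Qed.

Lemma exp_nextD f g s : nnm f -> nnm g ->
  exp_next P pi (fun x => f x + g x) s = exp_next P pi f s + exp_next P pi g s.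
Proof.
move=> hf hg; rewrite /exp_next.
rewrite -ge0_integralD//; last 4 first.
- by move=> a _; exact: inner_ge0.
- exact: sec_meas.
- by move=> a _; exact: inner_ge0.
- exact: sec_meas.
apply: eq_integral => a _; apply: ge0_integralD => //.
- by move=> y _; case: hf.
- by case: hf.
- by move=> y _; case: hg.
- by case: hg.
Qed.

Lemma exp_next_cst c s : exp_next P pi (fun _ => c) s = c.
Proof.
rewrite /exp_next.
transitivity (\int[pi s]_a (cst c) a).
  apply: eq_integral => a _.
  by rewrite (integral_cst _ measurableT) prob_kernel mule1.
by rewrite (integral_cst _ measurableT) prob_kernel mule1.
Qed.

Lemma exp_next_le f g s : nnm f -> nnm g -> (forall x, f x <= g x) ->
  exp_next P pi f s <= exp_next P pi g s.
Proof.
move=> hf hg fg; rewrite /exp_next.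
apply: ge0_le_integral => //.
- by move=> a _; exact: inner_ge0.
- exact: sec_meas.
- exact: sec_meas.
move=> a _; apply: ge0_le_integral => //.
- by move=> y _; case: hf.
- by case: hf.
- by case: hg.
Qed.

Lemma exp_nextZl (c : R) f s : (0 <= c)%R -> nnm f ->
  exp_next P pi (fun x => c%:E * f x) s = c%:E * exp_next P pi f s.
Proof.
move=> c0 hf; rewrite /exp_next.
rewrite -ge0_integralZl_EFin//; last 2 first.
- by move=> a _; exact: inner_ge0.
- exact: sec_meas.
apply: eq_integral => a _; apply: ge0_integralZl_EFin => //.
- by move=> y _; case: hf.
- by case: hf.
Qed.

Lemma exp_next_series (f : nat -> S -> \bar R) s : (forall t, nnm (f t)) ->
  exp_next P pi (fun x => \sum_(0 <= t <oo) f t x) s =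
  \sum_(0 <= t <oo) exp_next P pi (f t) s.
Proof.
move=> hf; rewrite /exp_next.
rewrite -integral_nneseries//; last 2 first.
- by move=> n; exact: sec_meas.
- by move=> n a _; exact: inner_ge0.
apply: eq_integral => a _; apply: integral_nneseries => //.
- by move=> n; case: (hf n).
- by move=> n y _; case: (hf n).
Qed.


Variables (U : set S) (mU : measurable U).

Definition ind : S -> \bar R := fun y => (\1_U y)%:E.

Lemma nnm_cst (c : R) : (0 <= c)%R -> nnm (fun _ => c%:E).
Proof. by move=> c0; split => // x; rewrite lee_fin. Qed.

Lemma ind_nnm : nnm ind.
Proof.
split; first by move=> x; rewrite /ind lee_fin.
by apply/measurable_EFinP; exact: measurable_indic.
Qed.

Lemma p_nnm t : nnm (exp_at P pi t ind).
Proof. elim: t => [|t IH] /=; [exact: ind_nnm | exact: exp_next_nnm]. Qed.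

Lemma p_le1 t y : exp_at P pi t ind y <= 1.
Proof.
elim: t y => [|t IH] y /=.
  by rewrite /ind lee_fin indicE; case: (y \in U).
rewrite -(exp_next_cst 1 y); apply: exp_next_le.
- exact: p_nnm.
- exact: nnm_cst.
- exact: IH.
Qed.

Lemma exp_reward_ind : exp_reward P pi (fun s _ _ => \1_U s) = ind.
Proof. by apply/funext => y; exact: (exp_next_cst (\1_U y)%:E y). Qed.

Lemma avoid_nnm n : nnm (avoid_prob P pi U n).
Proof.
elim: n => [|n IH] /=.
  split; first by move=> x; rewrite lee_fin.
  by apply/measurable_EFinP; apply: measurable_indic; exact: measurableC.
split.
  by move=> x; apply: mule_ge0; [rewrite lee_fin|exact: exp_next_ge0].
apply: emeasurable_funM.
  by apply/measurable_EFinP; apply: measurable_indic; exact: measurableC.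
exact: exp_next_meas.
Qed.

Lemma sum_nnm (f : nat -> S -> \bar R) n : (forall t, nnm (f t)) ->
  nnm (fun x => \sum_(0 <= t < n) f t x).
Proof.
move=> hf; split.
  by move=> x; apply: sume_ge0 => t _; case: (hf t).
by apply: emeasurable_sum => t; case: (hf t).
Qed.

Lemma exp_next_sum (f : nat -> S -> \bar R) n y : (forall t, nnm (f t)) ->
  \sum_(0 <= t < n) exp_next P pi (f t) y =
  exp_next P pi (fun x => \sum_(0 <= t < n) f t x) y.
Proof.
move=> hf; elim: n => [|n IH].
  rewrite big_geq// -[LHS](exp_next_cst 0 y).
  by congr (exp_next P pi _ y); apply/funext => x; rewrite big_geq.
rewrite big_nat_recr//= IH -exp_nextD//; last exact: sum_nnm.
by congr (exp_next P pi _ y); apply/funext => x; rewrite big_nat_recr.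
Qed.

Lemma avoid_bound n y :
  1 <= avoid_prob P pi U n y + \sum_(0 <= t < n.+1) exp_at P pi t ind y.
Proof.
elim: n y => [|n IH] y.
  rewrite big_nat1 /= /ind !indicE in_setC.
  by case: (y \in U) => /=; rewrite -EFinD lee_fin ?add0r ?addr0.
rewrite big_nat_recl //=.
have -> : \sum_(0 <= i < n.+1) exp_at P pi i.+1 ind y =
    \sum_(0 <= i < n.+1) exp_next P pi (exp_at P pi i ind) y by [].
rewrite exp_next_sum; last exact: p_nnm.
have hE0 := @exp_next_ge0 _ (avoid_nnm n) y.
have hS0 := @exp_next_ge0 _ (@sum_nnm _ n.+1 p_nnm) y.
rewrite /ind !indicE in_setC.
case: (y \in U) => /=.
  by rewrite mul0e add0e leeDl.
rewrite mul1e add0e -exp_nextD; [|exact: avoid_nnm|exact: (@sum_nnm _ n.+1 p_nnm)].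
rewrite -(exp_next_cst 1 y); apply: exp_next_le.
- exact: nnm_cst.
- split.
    by move=> x; apply: adde_ge0; [case: (avoid_nnm n)|case: (@sum_nnm _ n.+1 p_nnm)].
  by apply: emeasurable_funD; [case: (avoid_nnm n)|case: (@sum_nnm _ n.+1 p_nnm)].
- exact: IH.
Qed.

Lemma geo (gamma : R) : (0 <= gamma < 1)%R ->
  \sum_(0 <= t <oo) ((gamma ^+ t)%:E) = ((1 - gamma)^-1)%:E.
Proof.
move=> /andP[g0 g1].
have h := @cvg_geometric_series R 1 gamma.
have hg : (`|gamma| < 1)%R by rewrite ger0_norm.
move: (h hg); rewrite mul1r => {}h.
apply: cvg_lim => //.
rewrite (_ : (fun n => _) = EFin \o series (geometric 1 gamma)); last first.
  apply/funext => n /=; rewrite sumEFin /series /=; congr EFin.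
  by apply: eq_bigr => i _; rewrite /geometric /= mul1r.
by apply: cvg_comp h _.
Qed.

Lemma main (gamma : R) : (0 < gamma < 1)%R -> forall s, ~ U s ->
  hit_prob P pi U s = 1 ->
  0 < exp_next P pi (value P pi gamma (fun s _ _ => \1_U s)) s
      - value P pi gamma (fun s _ _ => \1_U s) s.
Proof.
move=> /andP[g0 g1] s nUs hit1.
rewrite /value exp_reward_ind.
have gt0 t : (0 <= gamma ^+ t)%R by rewrite exprn_ge0 // ltW.
have hterm t : nnm (fun x => (gamma ^+ t)%:E * exp_at P pi t ind x).
  split.
    by move=> x; apply: mule_ge0; [rewrite lee_fin|case: (p_nnm t)].
  by apply: measurable_funeM; case: (p_nnm t).
rewrite exp_next_series //.
have EX : \sum_(0 <= t <oo) exp_next P pi (fun x => (gamma ^+ t)%:E * exp_at P pi t ind x) s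
   = \sum_(0 <= t <oo) (gamma ^+ t)%:E * exp_next P pi (exp_at P pi t ind) s.
  by apply: eq_eseriesr => t _; apply: exp_nextZl => //; exact: p_nnm.
rewrite EX.
set X := \sum_(0 <= t <oo) (gamma ^+ t)%:E * exp_next P pi (exp_at P pi t ind) s.
have tge0 t : 0 <= (gamma ^+ t)%:E * exp_next P pi (exp_at P pi t ind) s.
  by apply: mule_ge0; [rewrite lee_fin|exact: exp_next_ge0 (p_nnm t) s].
have V : \sum_(0 <= t <oo) (gamma ^+ t)%:E * exp_at P pi t ind s = gamma%:E * X.
  rewrite nneseries_recl //; last by move=> t _; case: (hterm t).
  rewrite /= /ind indicE (memNset nUs) /= mule0 add0e.
  rewrite -nneseries_addn; last by move=> t; case: (hterm t).
  rewrite /X -nneseriesZl; last by move=> t _.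
  apply: eq_eseriesr => t _.
  by rewrite addn1 exprS EFinM -muleA.
rewrite V.
have X0 : 0 <= X by apply: nneseries_ge0 => t _ _.
have Xle : X <= ((1 - gamma)^-1)%:E.
  rewrite -geo; last by rewrite ltW.
  apply: lee_nneseries => [t _ _|t _]; first exact: tge0.
  rewrite -[leRHS]mule1; apply: lee_wpmul2l; first by rewrite lee_fin.
  exact: (p_le1 t.+1 s).
have Xpos : 0 < X.
  rewrite lt_neqAle X0 andbT; apply/negP => /eqP X0'.
  have pz t : exp_at P pi t ind s = 0.
    case: t => [|t]; first by rewrite /= /ind indicE (memNset nUs).
    apply/eqP; rewrite eq_le ((p_nnm t.+1).1 s) andbT leNgt; apply/negP => pt.
    have hle : (gamma ^+ t)%:E * exp_next P pi (exp_at P pi t ind) s <= X.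
      rewrite /X; apply: le_trans (@nneseries_lim_ge _ _ xpredT 0 t.+1 _); last first.
        by move=> n _ _; exact: tge0.
      rewrite big_nat_recr //= addeC; apply: leeDl.
      by apply: sume_ge0 => i _; exact: tge0.
    have hlt : 0 < (gamma ^+ t)%:E * exp_next P pi (exp_at P pi t ind) s.
      by apply: mule_gt0 => //; rewrite lte_fin exprn_gt0.
    by move: (lt_le_trans hlt hle); rewrite -X0' ltxx.
  have hb n : hit_by P pi U n s <= 0.
    rewrite /hit_by sube_le0.
    have := avoid_bound n s.
    have -> : \sum_(0 <= t < n.+1) exp_at P pi t ind s = 0.
      by apply: big1 => i _; exact: pz.
    by rewrite adde0.
  have : hit_prob P pi U s <= 0.
    by apply: ge_ereal_sup => _ [n _ <-]; exact: hb.
  by rewrite hit1 lee_fin ler10.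
have Xfin : X \is a fin_num.
  by rewrite ge0_fin_numE // (le_lt_trans Xle) ?ltry.
rewrite -(fineK Xfin) in Xpos *.
rewrite lte_fin in Xpos.
rewrite -EFinM -EFinB lte_fin.
have -> : (fine X - gamma * fine X = fine X * (1 - gamma))%R.
  by rewrite mulrBr mulr1 mulrC.
by apply: mulr_gt0 => //; rewrite subr_gt0.
Qed.

End Helpers.

Theorem lemma3 (R : realType) (dS dA : measure_display)
  (S : measurableType dS) (A : measurableType dA)
  (P : R.-pker (S * A)%type ~> S) (pi : R.-pker S ~> A)
  (U : set S) (mU : measurable U) (gamma : R) (hgamma : 0 < gamma < 1)
  (I : set S) (mI : measurable I)
  (habs : absorbing P pi I)
  (hhit : forall s, (I `\` U) s -> hit_prob P pi U s = 1%E) :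
  forall s, (I `\` U) s ->
    (0 < exp_next P pi (value P pi gamma (fun s _ _ => \1_U s)) s
         - value P pi gamma (fun s _ _ => \1_U s) s)%E.
Proof.
move=> s hs.
apply: (@main R dS dA S A P pi U mU gamma hgamma s); first by case: hs.
exact: hhit.
Qed.
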